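(* Let $\theta_1<\theta_2$, $f\in C^2([\theta_1,\theta_2])$, $\gamma>1$, and let $I\subseteq[\theta_1,\theta_2]$ be a closed interval. Suppose that, for positive constants $A$ and $\alpha$ with $\alpha<2\gamma-2$, one of the following holds: $f(s)f''(s)\le -A(s-\theta_1)^\alpha$ for all $s\in I$; or $f(s)f''(s)\le -A(\theta_2-s)^\alpha$ for all $s\in I$. Then there is a constant $C>0$ depending only on $A,\alpha,\theta_1,\theta_2,\gamma$ such that $\int_I|f(s)|^{-1/\gamma}\,ds\le C$. *)

(* Defs.v *)
From HB Require Import structures.
From mathcomp Require Import all_boot all_order all_algebra.
From mathcomp Require Import all_classical all_reals all_analysis.
Set Implicit Arguments. Unset Strict Implicit. Unset Printing Implicit Defensive.
Import Order.TTheory GRing.Theory Num.Theory.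
Import numFieldNormedType.Exports.
Local Open Scope classical_set_scope.
Local Open Scope ring_scope.

Definition negpow_abs {R : realType} (gamma : R) (f : R -> R) (s : R) : \bar R :=
  if f s == 0 then +oo%E else ((`|f s|) `^ (- gamma^-1))%:E.

(* f is C^2 on [t1,t2]: f, f1, f2 continuous on the closed interval, and
   f' = f1, f1' = f2 on the open interval (so f1, f2 are the continuous
   extensions of the derivatives, i.e. the one-sided derivatives at endpoints). *)
Definition C2_on {R : realType} (t1 t2 : R) (f f1 f2 : R -> R) : Prop :=
  [/\ {within `[t1, t2], continuous f},
      {within `[t1, t2], continuous f1},
      {within `[t1, t2], continuous f2},
      (forall x, t1 < x < t2 -> is_derive x 1 f (f1 x)) &
      (forall x, t1 < x < t2 -> is_derive x 1 f1 (f2 x))].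

(* Main.v *)
Require Import Defs.
From HB Require Import structures.
From mathcomp Require Import all_boot all_order all_algebra.
From mathcomp Require Import all_classical all_reals all_analysis.
From mathcomp Require Import ring lra measurable_realfun.
Import Order.TTheory GRing.Theory Num.Theory.
Import numFieldNormedType.Exports.
Local Open Scope classical_set_scope.
Local Open Scope ring_scope.

Section S.
Context {R : realType}.

Lemma is_derive_cont {f : R -> R} {x df : R} : is_derive x 1 f df -> {for x, continuous f}.
Proof.
move=> H; apply: differentiable_continuous; apply/derivable1_diffP.
by case: H.
Qed.

Lemma quad_bound {f f1 f2 : R -> R} {u v K s x : R} :
  {within `[u, v], continuous f} ->
  (forall y, u < y < v -> is_derive y 1 f (f1 y)) ->
  (forall y, u < y < v -> is_derive y 1 f1 (f2 y)) ->
  (forall y, u < y < v -> f2 y <= - K) ->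
  u < s < v -> u <= x <= v ->
  f x <= f s + f1 s * (x - s) - K / 2 * ((x - s) * (x - s)).
Proof.
move=> cf df df1 f2K /andP[us sv] /andP[ux xv].
have h1dec : forall y z, u < y -> y <= z -> z < v -> f1 z + K * z <= f1 y + K * y.
  move=> y z uy yz zv.
  case: (ltrgtP y z) yz => // [yz _|-> _]; last by [].
  have [c /andP[yc cz] E] : exists2 c, c \in `]y, z[ & f1 z - f1 y = f2 c * (z - y).
    apply: MVT => //.
      move=> c; rewrite in_itv /= => /andP[yc cz]; apply: df1.
      by apply/andP; split; [apply: lt_trans yc|apply: lt_trans zv].
    apply: continuous_in_subspaceT => c; rewrite inE /= in_itv /= => /andP[yc cz].
    apply: (@is_derive_cont _ _ (f2 c)); apply: df1.
    by apply/andP; split; [apply: lt_le_trans yc|apply: le_lt_trans zv].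
  have : f2 c <= - K by apply: f2K; apply/andP; split; [apply: lt_trans yc|apply: lt_trans zv].
  move=> H.
  have : f2 c * (z - y) <= - K * (z - y) by apply: ler_wpM2r => //; rewrite subr_ge0 ltW.
  lra.
pose h y := f y - f1 s * y + K / 2 * (y * y) - K * s * y.
pose P := cst (- f1 s) * id + cst (K / 2) * (id * id) - cst (K * s) * id.
have hE : h = f + P by apply/funext => z; rewrite /h /P !fctE /=; lra.
have dP : forall y : R, is_derive y 1 P (- f1 s + K * y - K * s).
  move=> y.
  have H1 := is_deriveM (is_derive_cst (- f1 s) y 1) (is_derive_id y (1 : R)).
  have H2 := is_deriveM (is_derive_cst (K / 2) y 1)
    (is_deriveM (is_derive_id y (1 : R)) (is_derive_id y (1 : R))).
  have H3 := is_deriveM (is_derive_cst (K * s) y 1) (is_derive_id y (1 : R)).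
  apply: (is_derive_eq (is_deriveB (is_deriveD H1 H2) H3)).
  by rewrite /GRing.scale /=; lra.
have dh : forall y, u < y < v -> is_derive y 1 h (f1 y - f1 s + K * y - K * s).
  move=> y uyv; rewrite hE.
  apply: (is_derive_eq (is_deriveD (df y uyv) (dP y))).
  lra.
have ch : {within `[u, v], continuous h}.
  rewrite hE => z; apply: continuousD; first exact: cf.
  apply: (continuous_subspaceT (A := `[u, v]) (f := P)) => w.
  exact: is_derive_cont (dP w).
suff : h x <= h s by rewrite /h; lra.
case: (ltrgtP x s) => [xs|sx|->]; last by [].
- have [c /andP[xc cs] E] : exists2 c, c \in `]x, s[ & h s - h x = (f1 c - f1 s + K * c - K * s) * (s - x).
    apply: MVT => //.
      move=> c; rewrite in_itv /= => /andP[xc cs]; apply: dh.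
      by apply/andP; split; [apply: le_lt_trans xc|apply: lt_trans sv].
    apply: continuous_subspaceW ch => y; rewrite /= !in_itv /= => /andP[xy ys].
    by apply/andP; split; [apply: le_trans xy|apply: (le_trans ys); apply: ltW].
  have := h1dec c s (le_lt_trans ux xc) (ltW cs) sv.
  move=> H; have : 0 <= (f1 c - f1 s + K * c - K * s) * (s - x).
    by apply: mulr_ge0; lra.
  lra.
- have [c /andP[sc cx] E] : exists2 c, c \in `]s, x[ & h x - h s = (f1 c - f1 s + K * c - K * s) * (x - s).
    apply: MVT => //.
      move=> c; rewrite in_itv /= => /andP[sc cx]; apply: dh.
      by apply/andP; split; [apply: lt_trans sc|apply: lt_le_trans xv].
    apply: continuous_subspaceW ch => y; rewrite /= !in_itv /= => /andP[sy yx].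
    by apply/andP; split; [apply: le_trans sy; apply: ltW|apply: (le_trans yx)].
  have := h1dec s c us (ltW sc) (lt_le_trans cx xv).
  move=> H; have : (f1 c - f1 s + K * c - K * s) * (x - s) <= 0.
    by apply: mulr_le0_ge0; lra.
  lra.
Qed.

Lemma interval_bound (f f1 f2 : R -> R) (a b p q e c : R) :
  {within `[a, b], continuous f} ->
  (forall y, a < y < b -> is_derive y 1 f (f1 y)) ->
  (forall y, a < y < b -> is_derive y 1 f1 (f2 y)) ->
  a <= p -> p < q -> q <= b ->
  (forall y, p <= y <= q -> 0 <= f y <= e) ->
  (forall y, p < y < q -> f y * f2 y <= - c) -> 0 < c ->
  c * ((q - p) * (q - p)) <= 8 * (e * e).
Proof.
move=> cf df df1 ap pq qb fe H c0.
pose m := (p + q) / 2.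
have pmq : p < m < q by apply/andP; split; rewrite /m; lra.
have /andP[fm0 fme] : 0 <= f m <= e by apply: fe; apply/andP; split; rewrite /m; lra.
have e0 : 0 < e.
  suff : 0 < f m by lra.
  rewrite lt_def fm0 andbT; apply/eqP => E; have := H m pmq; rewrite E mul0r; lra.
have f2le : forall y, p < y < q -> f2 y <= - (c / e).
  move=> y pyq; have := H y pyq.
  have /andP[fy0 fye] : 0 <= f y <= e by apply: fe; case/andP: pyq => *; apply/andP; split; lra.
  move=> Hy.
  have f2n : f2 y < 0.
    rewrite ltNge; apply/negP => h; have := mulr_ge0 fy0 h; lra.
  have : (e - f y) * f2 y <= 0 by apply: mulr_ge0_le0; lra.
  have : e * f2 y <= - c by nra.
  move=> Hey; rewrite -mulNr ler_pdivlMr //; lra.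
have cf' : {within `[p, q], continuous f}.
  apply: continuous_subspaceW cf => y; rewrite /= !in_itv /= => /andP[py yq].
  by apply/andP; split; lra.
have df' : forall y, p < y < q -> is_derive y 1 f (f1 y).
  by move=> y /andP[py yq]; apply: df; apply/andP; split; lra.
have df1' : forall y, p < y < q -> is_derive y 1 f1 (f2 y).
  by move=> y /andP[py yq]; apply: df1; apply/andP; split; lra.
have Hp := quad_bound (x := p) cf' df' df1' f2le pmq ltac:(apply/andP; split; lra).
have Hq := quad_bound (x := q) cf' df' df1' f2le pmq ltac:(apply/andP; split; lra).
have fp0 : 0 <= f p by case/andP: (fe p ltac:(apply/andP; split; lra)).
have fq0 : 0 <= f q by case/andP: (fe q ltac:(apply/andP; split; lra)).
have : c / e * ((q - p) * (q - p)) <= 8 * e.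
  move: Hp Hq; rewrite /m; nra.
move=> He.
have -> : c * ((q - p) * (q - p)) = c / e * ((q - p) * (q - p)) * e.
  by field; lra.
have : c / e * ((q - p) * (q - p)) * e <= 8 * e * e by apply: ler_wpM2r; lra.
lra.
Qed.

Lemma powR_mono (x y al : R) : 0 <= al -> 0 <= x -> x <= y -> x `^ al <= y `^ al.
Proof.
move=> al0 x0 xy; apply: ge0_ler_powR => //; rewrite nnegrE //; lra.
Qed.

Lemma main_pos (f f1 f2 W : R -> R) (a b s A al : R) :
  {within `[a, b], continuous f} ->
  (forall y, a < y < b -> is_derive y 1 f (f1 y)) ->
  (forall y, a < y < b -> is_derive y 1 f1 (f2 y)) ->
  (forall y, a <= y <= b -> 0 <= f y) ->
  0 < A -> 0 <= al ->
  (forall y, a < y < b -> f y * f2 y <= - (A * W y)) ->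
  ((forall y, a < y < b -> (y - a) `^ al <= W y) \/
   (forall y, a < y < b -> (b - y) `^ al <= W y)) ->
  a < s < b ->
  A * (Num.min (s - a) (b - s) / 2) `^ al *
    ((Num.min (s - a) (b - s) / 2) * (Num.min (s - a) (b - s) / 2)) <= 8 * (f s * f s).
Proof.
move=> cf df df1 f0 A0 al0 HW Hcase /andP[as_ sb].
set D := Num.min (s - a) (b - s).
have D1 : D <= s - a by rewrite /D ge_min lexx.
have D2 : D <= b - s by rewrite /D ge_min lexx orbT.
have D0 : 0 < D by rewrite /D lt_min; apply/andP; split; lra.
have Wpos : forall y, a < y < b -> 0 < W y.
  move=> y /andP[ay yb]; case: Hcase => H.
    by apply: lt_le_trans (H y ltac:(apply/andP; split; lra)); apply: powR_gt0; lra.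
  by apply: lt_le_trans (H y ltac:(apply/andP; split; lra)); apply: powR_gt0; lra.
have f2n : forall y, a < y < b -> f2 y <= - 0.
  move=> y ayb; rewrite oppr0 leNgt; apply/negP => h.
  have := HW y ayb; have := mulr_gt0 A0 (Wpos y ayb).
  have : 0 <= f y * f2 y.
    apply: mulr_ge0; last exact: ltW.
    by apply: f0; case/andP: ayb => ? ?; apply/andP; split; apply: ltW.
  lra.
have tang : forall x, a <= x <= b -> f x <= f s + f1 s * (x - s).
  move=> x axb.
  have := quad_bound (K := 0) (s := s) cf df df1 f2n ltac:(apply/andP; split; lra) axb.
  by rewrite mul0r mul0r subr0.
have [l [al_ lb fle]] : exists l, [/\ a <= l, l + D <= b &
    forall y, l <= y <= l + D -> 0 <= f y <= f s].
  case: (lerP 0 (f1 s)) => h.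
  - exists (s - D); split; [lra|lra|].
    move=> y /andP[ly yl]; apply/andP; split; first by apply: f0; apply/andP; split; lra.
    have := tang y ltac:(apply/andP; split; lra).
    have : f1 s * (y - s) <= 0 by apply: mulr_ge0_le0; lra.
    lra.
  - exists s; split; [lra|lra|].
    move=> y /andP[ly yl]; apply/andP; split; first by apply: f0; apply/andP; split; lra.
    have := tang y ltac:(apply/andP; split; lra).
    have : f1 s * (y - s) <= 0 by apply: mulr_le0_ge0; lra.
    lra.
have cpos : 0 < A * (D / 2) `^ al by apply: mulr_gt0 => //; apply: powR_gt0; lra.
case: Hcase => H.
- have := @interval_bound f f1 f2 a b (l + D / 2) (l + D) (f s) (A * (D / 2) `^ al)
    cf df df1 ltac:(lra) ltac:(lra) ltac:(lra).
  have -> : l + D - (l + D / 2) = D / 2 by field.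
  apply.
  + by move=> y /andP[py yq]; apply: fle; apply/andP; split; lra.
  + move=> y /andP[py yq].
    have ayb : a < y < b by apply/andP; split; lra.
    apply: le_trans (HW y ayb) _; rewrite lerN2; apply: ler_wpM2l; first lra.
    apply: le_trans (H y ayb); apply: powR_mono => //; lra.
  + exact: cpos.
- have := @interval_bound f f1 f2 a b l (l + D / 2) (f s) (A * (D / 2) `^ al)
    cf df df1 ltac:(lra) ltac:(lra) ltac:(lra).
  have -> : l + D / 2 - l = D / 2 by field.
  apply.
  + by move=> y /andP[py yq]; apply: fle; apply/andP; split; lra.
  + move=> y /andP[py yq].
    have ayb : a < y < b by apply/andP; split; lra.
    apply: le_trans (HW y ayb) _; rewrite lerN2; apply: ler_wpM2l; first lra.
    apply: le_trans (H y ayb); apply: powR_mono => //; lra.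
  + exact: cpos.
Qed.
End S.

Section S.
Context {R : realType}.
Lemma pt_bound (X Dh A al g : R) : 0 < X -> 0 < Dh -> 0 < A -> 0 <= al -> 0 < g ->
  A * Dh `^ al * (Dh * Dh) <= 8 * (X * X) ->
  X `^ (- g^-1) <= (A / 8) `^ (- (2 * g)^-1) * Dh `^ (- ((al + 2) / (2 * g))).
Proof.
move=> X0 D0 A0 al0 g0 H.
set r := (2 * g)^-1.
have r0 : 0 <= r by rewrite /r invr_ge0; lra.
have E1 : Dh `^ al * (Dh * Dh) = Dh `^ (al + 2).
  rewrite powRD; last by apply/implyP => _; rewrite gt_eqF.
  by rewrite (powR_mulrn 2 (ltW D0)) expr2.
have H2 : (A / 8) * Dh `^ (al + 2) <= X * X.
  rewrite -E1; lra.
have H3 : ((A / 8) * Dh `^ (al + 2)) `^ r <= (X * X) `^ r.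
  apply: powR_mono => //; apply: mulr_ge0; [lra| exact: powR_ge0].
have E2 : (X * X) `^ r = X `^ (g^-1).
  rewrite -expr2 -(powR_mulrn 2 (ltW X0)) -powRrM; congr (_ `^ _).
  by rewrite /r; field; lra.
have E3 : ((A / 8) * Dh `^ (al + 2)) `^ r = (A / 8) `^ r * Dh `^ ((al + 2) / (2 * g)).
  rewrite powRM; [|lra|exact: powR_ge0].
  by rewrite -powRrM.
rewrite E2 E3 in H3.
rewrite !powRN -invfM.
rewrite lef_pV2 //.
  by rewrite posrE; apply: powR_gt0.
by rewrite posrE; apply: mulr_gt0; apply: powR_gt0; lra.
Qed.
End S.

Section S.
Context {R : realType}.

Lemma is_derive_comp1 {f g : R -> R} {x df dg : R} :
  is_derive x 1 f df -> is_derive (f x) 1 g dg -> is_derive x 1 (g \o f) (dg * df).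
Proof.
move=> Hf Hg.
have d1 : derivable f x 1 by case: Hf.
have d2 : derivable g (f x) 1 by case: Hg.
have dc : differentiable (g \o f) x.
  by apply: differentiable_comp; apply/derivable1_diffP.
apply: DeriveDef; first by apply/derivable1_diffP.
rewrite -derive1E derive1_comp // !derive1E.
by rewrite (@derive_val _ _ _ _ _ _ _ Hf) (@derive_val _ _ _ _ _ _ _ Hg).
Qed.

Lemma dpowl {a : R} (p : R) {x : R} : a < x ->
  is_derive x 1 (fun y => (y - a) `^ p) (p * (x - a) `^ (p - 1)).
Proof.
move=> ax.
have H1 : is_derive x 1 (shift (- a)) 1 := is_derive_shift x 1 (- a).
have H2 : is_derive (shift (- a) x) 1 (@powR R ^~ p) (p * (shift (-a) x) `^ (p - 1)).
  by apply: is_derive1_powR; rewrite /shift /=; lra.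
have := is_derive_comp1 H1 H2.
by rewrite mulr1.
Qed.

Lemma dpowr {b : R} (p : R) {x : R} : x < b ->
  is_derive x 1 (fun y => (b - y) `^ p) (- (p * (b - x) `^ (p - 1))).
Proof.
move=> xb.
have H1 : is_derive x 1 (- shift (- b)) (- 1) := is_deriveN (is_derive_shift x 1 (- b)).
have H2 : is_derive ((- shift (- b)) x) 1 (@powR R ^~ p) (p * ((- shift (-b)) x) `^ (p - 1)).
  by apply: is_derive1_powR; rewrite !fctE /shift /=; lra.
have := is_derive_comp1 H1 H2.
have E : (@powR R ^~ p) \o (- shift (- b)) = (fun y => (b - y) `^ p).
  by apply/funext => y; rewrite /= !fctE /shift /=; congr (_ `^ _); lra.
rewrite E => H; apply: (is_derive_eq H); rewrite !fctE /shift /=.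
have -> : - (x - b) = b - x by lra.
lra.
Qed.

Lemma ftc_piece (a b q u v : R) : a < u -> u < v -> v < b -> 0 < q < 1 ->
  (\int[lebesgue_measure]_(x in `[u, v]) ((x - a) `^ (- q) + (b - x) `^ (- q))%:E
   = ((((v - a) `^ (1 - q) - (b - v) `^ (1 - q)) -
       ((u - a) `^ (1 - q) - (b - u) `^ (1 - q))) / (1 - q))%:E)%E.
Proof.
move=> au uv vb /andP[q0 q1].
pose g := fun x : R => (x - a) `^ (- q) + (b - x) `^ (- q).
pose G := fun x : R => ((x - a) `^ (1 - q) - (b - x) `^ (1 - q)) / (1 - q).
have dg : forall x, a < x < b -> {for x, continuous g}.
  move=> x /andP[ax xb].
  have H := is_deriveD (dpowl (- q) ax) (dpowr (- q) xb).
  have gE : g = (fun y => (y - a) `^ (- q)) + (fun y => (b - y) `^ (- q)).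
    by apply/funext => y; rewrite !fctE.
  rewrite gE; exact: (is_derive_cont H).
have dG : forall x, a < x < b -> is_derive x 1 G (g x).
  move=> x /andP[ax xb].
  have H := is_deriveM (is_deriveB (dpowl (1 - q) ax) (dpowr (1 - q) xb))
              (is_derive_cst (1 - q)^-1 x 1).
  have GE : G = ((fun y => (y - a) `^ (1 - q)) - (fun y => (b - y) `^ (1 - q))) * cst (1 - q)^-1.
    by apply/funext => y; rewrite /G !fctE.
  rewrite GE; apply: (is_derive_eq H).
  rewrite /g !fctE /= /GRing.scale /=.
  rewrite (_ : 1 - q - 1 = - q); last by lra.
  field; lra.
have -> : ((((v - a) `^ (1 - q) - (b - v) `^ (1 - q)) -
       ((u - a) `^ (1 - q) - (b - u) `^ (1 - q))) / (1 - q)) = G v - G u.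
  by rewrite /G; field; lra.
rewrite EFinB.
apply: (continuous_FTC2 (f := g)) => //.
- apply: continuous_in_subspaceT => x; rewrite inE /= in_itv /= => /andP[ux xv].
  by apply: dg; apply/andP; split; lra.
- split.
  + move=> x; rewrite in_itv /= => /andP[ux xv].
    by case: (dG x ltac:(apply/andP; split; lra)).
  + apply: cvg_at_right_filter.
    by apply: (is_derive_cont (dG u ltac:(apply/andP; split; lra))).
  + apply: cvg_at_left_filter.
    by apply: (is_derive_cont (dG v ltac:(apply/andP; split; lra))).
- move=> x; rewrite in_itv /= => /andP[ux xv].
  rewrite derive1E.
  have D := dG x ltac:(apply/andP; split; lra).
  by rewrite (@derive_val _ _ _ _ _ _ _ D).
Qed.

Lemma int_bound (a b q : R) : a < b -> 0 < q < 1 ->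
  (\int[lebesgue_measure]_(x in `]a, b[) ((x - a) `^ (- q) + (b - x) `^ (- q))%:E
     <= (2 * (b - a) `^ (1 - q) / (1 - q))%:E)%E.
Proof.
move=> ab /andP[q0 q1].
pose g := fun x : R => (x - a) `^ (- q) + (b - x) `^ (- q).
pose e := fun n : nat => (b - a) / (n.+3)%:R.
have e0 : forall n, 0 < e n by move=> n; apply: divr_gt0; [lra| rewrite ltr0n].
have e2 : forall n, e n * 2 < b - a.
  move=> n; rewrite /e mulrAC ltr_pdivrMr ?ltr0n //.
  have h : (2:R) < n.+3%:R by rewrite ltr_nat.
  nra.
pose F := fun n => `[a + e n, b - e n]%classic.
have FU : `]a, b[%classic = \bigcup_n F n.
  apply/seteqP; split => x /=.
  - rewrite in_itv /= => /andP[ax xb].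
    set d := Num.min (x - a) (b - x).
    have d1 : d <= x - a by rewrite /d ge_min lexx.
    have d2 : d <= b - x by rewrite /d ge_min lexx orbT.
    have d0 : 0 < d by rewrite /d lt_min; apply/andP; split; lra.
    exists (Num.trunc ((b - a) / d)) => //.
    have Ht := truncnS_gt ((b - a) / d).
    set N := Num.trunc _ in Ht *.
    have : e N <= d.
      rewrite /e ler_pdivrMr ?ltr0n //.
      rewrite ltr_pdivrMr // in Ht.
      have : (N.+1%:R : R) <= N.+3%:R by rewrite ler_nat ltnS; apply: ltnW; exact: leqnSn.
      move=> HN; have : d * N.+1%:R <= d * N.+3%:R by apply: ler_wpM2l; lra.
      rewrite mulrC; lra.
    move=> HeN; rewrite /F /= in_itv /=; apply/andP; split; lra.
  - move=> [n _]; rewrite /F /= in_itv /= => /andP[h1 h2]; rewrite in_itv /=.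
    have := e0 n; move=> ?; apply/andP; split; lra.
have nd : nondecreasing_seq F.
  move=> n m nm; rewrite subsetEset => x; rewrite /F /= !in_itv /= => /andP[h1 h2].
  have : e m <= e n.
    rewrite /e ler_pdivrMr ?ltr0n // mulrAC ler_pdivlMr ?ltr0n //.
    apply: ler_wpM2l; first lra.
    by rewrite ler_nat !ltnS.
  move=> H; apply/andP; split; lra.
have mF : forall n, measurable (F n) by move=> n; exact: measurable_itv.
have cg : forall n, {within F n, continuous g}.
  move=> n; apply: continuous_in_subspaceT => x; rewrite inE /F /= in_itv /= => /andP[h1 h2].
  have := e0 n => en.
  have ax : a < x by lra.
  have xb : x < b by lra.
  have H := is_deriveD (dpowl (- q) ax) (dpowr (- q) xb).
  have gE : g = (fun y => (y - a) `^ (- q)) + (fun y => (b - y) `^ (- q)).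
    by apply/funext => y; rewrite !fctE.
  rewrite gE; exact: (is_derive_cont H).
have mf : forall n, measurable_fun (F n) (EFin \o g).
  move=> n; apply/measurable_EFinP.
  exact: subspace_continuous_measurable_fun (mF n) (cg n).
have f0 : forall n x, F n x -> (0 <= (g x)%:E)%E.
  by move=> n x _; rewrite lee_fin addr_ge0 // powR_ge0.
have cvgI := ge0_nondecreasing_set_cvg_integral (mu := @lebesgue_measure R) nd mF mf f0.
rewrite FU -(cvg_lim _ cvgI) //.
apply: lime_le; first by apply/cvg_ex; eexists; exact: cvgI.
apply: nearW => n.
have en := e0 n; have en2 := e2 n.
rewrite (@ftc_piece a b q (a + e n) (b - e n)); [|lra|lra|lra|by rewrite q0 q1].
rewrite lee_fin.
have -> : b - e n - a = b - a - e n by lra.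
have -> : b - (b - e n) = e n by lra.
have -> : a + e n - a = e n by lra.
have -> : b - (a + e n) = b - a - e n by lra.
have H1 : (b - a - e n) `^ (1 - q) <= (b - a) `^ (1 - q) by apply: powR_mono; lra.
have H2 := @powR_ge0 _ (e n) (1 - q).
apply: ler_wpM2r; first by rewrite invr_ge0; lra.
lra.
Qed.
End S.

Section S.
Context {R : realType}.

Lemma meas_negpow (g : R) (f : R -> R) (a b : R) :
  {within `[a, b], continuous f} -> measurable_fun `]a, b[ (negpow_abs g f).
Proof.
move=> cf.
pose phi := fun y : R => if y == 0 then +oo%E else ((`|y|) `^ (- g^-1))%:E.
have -> : negpow_abs g f = phi \o f by apply/funext => x; rewrite /negpow_abs /phi.
apply: measurableT_comp.
- apply: measurable_fun_ifT.
  + apply: (measurable_fun_bool true).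
    rewrite (_ : _ @^-1` _ = [set 0]) ?setTI//.
    by apply/seteqP; split => [_ /eqP ->//|_ -> /=]; rewrite eqxx.
  + exact: measurable_cst.
  + apply/measurable_EFinP.
    apply: (@measurableT_comp _ _ _ _ _ _ (@powR R ^~ (- g^-1)) _ (@Num.norm _ R)).
      exact: measurable_powR.
    exact: normr_measurable.
- apply: subspace_continuous_measurable_fun; first exact: measurable_itv.
  apply: continuous_subspaceW cf => x /=; exact: subset_itv_oo_cc.
Qed.

Lemma sign_const (f : R -> R) (a b : R) : {within `[a, b], continuous f} ->
  (forall y, a < y < b -> f y != 0) ->
  (forall y, a <= y <= b -> 0 <= f y) \/ (forall y, a <= y <= b -> f y <= 0).
Proof.
move=> cf nz.
have key : forall x y, a <= x -> x <= y -> y <= b -> f x * f y < 0 -> False.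
  move=> x y ax xy yb H.
  have [c cxy fc] : exists2 c, c \in `[x, y] & f c = 0.
    apply: IVT => //.
      apply: continuous_subspaceW cf => z /=; rewrite !in_itv /= => /andP[h1 h2].
      by apply/andP; split; lra.
    case: (ltrP (f x) 0) => h.
    - have h2 : 0 < f y by nra.
      rewrite ge_min le_max; apply/andP; split; apply/orP; [left|right]; lra.
    - have h2 : f y < 0 by nra.
      rewrite ge_min le_max; apply/andP; split; apply/orP; [right|left]; lra.
  move: cxy; rewrite in_itv /= => /andP[xc cy].
  have cx : c != x by apply/eqP => E; move: H; rewrite -E fc mul0r; lra.
  have cy' : c != y by apply/eqP => E; move: H; rewrite -E fc mulr0; lra.
  have : a < c < b.
    apply/andP; split.
    + by apply: le_lt_trans ax _; rewrite lt_neqAle eq_sym cx xc.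
    + by apply: lt_le_trans yb; rewrite lt_neqAle cy' cy.
  by move=> /nz; rewrite fc eqxx.
have [H|H] := pselect (forall y, a <= y <= b -> 0 <= f y); first by left.
right => y ayb.
move/existsNP: H => [y0 /not_implyP [ay0b /negP]]; rewrite -ltNge => fy0.
rewrite leNgt; apply/negP => fy.
have /andP[h1 h2] := ayb; have /andP[h3 h4] := ay0b.
case: (lerP y y0) => yy0.
- by apply: (key y y0) => //; nra.
- by apply: (key y0 y) => //; [exact: ltW| nra].
Qed.
End S.


Lemma neg_derive {R : realType} {f : R -> R} {x d : R} :
  is_derive x 1 f d -> is_derive x 1 (fun y => - f y) (- d).
Proof.
move=> H; have H' := is_deriveN H.
have -> : (fun y => - f y) = - f by apply/funext => y; rewrite fctE.
exact: H'.
Qed.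

Theorem lemma3p7 (R : realType) (t1 t2 gamma A alpha : R) :
  t1 < t2 -> 1 < gamma -> 0 < A -> 0 < alpha -> alpha < 2 * gamma - 2 ->
  exists C : R, 0 < C /\
    forall (f f1 f2 : R -> R) (a b : R),
      C2_on t1 t2 f f1 f2 ->
      t1 <= a -> a <= b -> b <= t2 ->
      ((forall s, a <= s <= b -> f s * f2 s <= - (A * (s - t1) `^ alpha)) \/
       (forall s, a <= s <= b -> f s * f2 s <= - (A * (t2 - s) `^ alpha))) ->
      (\int[lebesgue_measure]_(s in `[a, b]) negpow_abs gamma f s <= C%:E)%E.
Proof.
move=> t12 g1 A0 al0 alg.
set r := (2 * gamma)^-1.
set q := (alpha + 2) / (2 * gamma).
have q0 : 0 < q by apply: divr_gt0; lra.
have q1 : q < 1 by rewrite /q ltr_pdivrMr; lra.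
set M := (A / 8) `^ (- r) * (2^-1) `^ (- q).
have M0 : 0 < M by apply: mulr_gt0; apply: powR_gt0; lra.
have T0 : 0 < (t2 - t1) `^ (1 - q) by apply: powR_gt0; lra.
exists (M * (2 * (t2 - t1) `^ (1 - q) / (1 - q))).
have C0 : 0 < M * (2 * (t2 - t1) `^ (1 - q) / (1 - q)).
  apply: mulr_gt0 => //; apply: divr_gt0; lra.
split; first exact: C0.
move=> f f1 f2 a b [cf cf1 cf2 df df1] ta ab bt Hcase.
have cfab : {within `[a, b], continuous f}.
  apply: continuous_subspaceW cf => x /=; rewrite !in_itv /= => /andP[h1 h2].
  by apply/andP; split; lra.
have dfab : forall y, a < y < b -> is_derive y 1 f (f1 y).
  by move=> y /andP[h1 h2]; apply: df; apply/andP; split; lra.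
have df1ab : forall y, a < y < b -> is_derive y 1 f1 (f2 y).
  by move=> y /andP[h1 h2]; apply: df1; apply/andP; split; lra.
have [W [HW HWc]] : exists W : R -> R,
    (forall y, a < y < b -> f y * f2 y <= - (A * W y)) /\
    ((forall y, a < y < b -> (y - a) `^ alpha <= W y) \/
     (forall y, a < y < b -> (b - y) `^ alpha <= W y)).
  case: Hcase => H.
  - exists (fun y => (y - t1) `^ alpha); split.
    + by move=> y /andP[h1 h2]; apply: H; apply/andP; split; lra.
    + by left => y /andP[h1 h2]; apply: powR_mono; lra.
  - exists (fun y => (t2 - y) `^ alpha); split.
    + by move=> y /andP[h1 h2]; apply: H; apply/andP; split; lra.
    + by right => y /andP[h1 h2]; apply: powR_mono; lra.
have Wpos : forall y, a < y < b -> 0 < W y.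
  move=> y /andP[h1 h2]; case: HWc => H.
  - apply: lt_le_trans (H y _); [apply: powR_gt0; lra | by apply/andP; split].
  - apply: lt_le_trans (H y _); [apply: powR_gt0; lra | by apply/andP; split].
have nz : forall y, a < y < b -> f y != 0.
  move=> y ayb; apply/eqP => E; have := HW y ayb; rewrite E mul0r.
  have := mulr_gt0 A0 (Wpos y ayb); lra.
have sign := @sign_const _ f a b cfab nz.
have pb : forall s, a < s < b ->
    (negpow_abs gamma f s <= (M * ((s - a) `^ (- q) + (b - s) `^ (- q)))%:E)%E.
  move=> s asb.
  set D := Num.min (s - a) (b - s).
  have D0 : 0 < D by rewrite /D lt_min; case/andP: asb => ? ?; apply/andP; split; lra.
  have key : A * (D / 2) `^ alpha * ((D / 2) * (D / 2)) <= 8 * (f s * f s).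
    case: sign => Hs.
    - exact: (@main_pos _ f f1 f2 W a b s A alpha cfab dfab df1ab Hs A0 (ltW al0) HW HWc asb).
    - have cfn : {within `[a, b], continuous (fun y => - f y)}.
        by move=> x; apply: continuousN; exact: cfab.
      have := @main_pos _ (fun y => - f y) (fun y => - f1 y) (fun y => - f2 y) W a b s A alpha
        cfn (fun y h => neg_derive (dfab y h)) (fun y h => neg_derive (df1ab y h))
        ltac:(by move=> y h; rewrite oppr_ge0; apply: Hs)
        A0 (ltW al0) ltac:(by move=> y h; rewrite mulrNN; apply: HW) HWc asb.
      by rewrite mulrNN.
  have fs0 := nz s asb.
  have X0 : 0 < `|f s| by rewrite normr_gt0.
  have key' : A * (D / 2) `^ alpha * ((D / 2) * (D / 2)) <= 8 * (`|f s| * `|f s|).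
    have E : `|f s| * `|f s| = f s * f s by rewrite -normrM ger0_norm // -expr2 sqr_ge0.
    by rewrite E.
  have pt := @pt_bound _ `|f s| (D / 2) A alpha gamma X0 ltac:(lra) A0 (ltW al0) ltac:(lra) key'.
  rewrite /negpow_abs (negbTE fs0) lee_fin.
  apply: le_trans pt _.
  rewrite -/r -/q.
  have E : (D / 2) `^ (- q) = D `^ (- q) * 2^-1 `^ (- q).
    by rewrite powRM //; lra.
  have Dle : D `^ (- q) <= (s - a) `^ (- q) + (b - s) `^ (- q).
    case: (leP (s - a) (b - s)) => h.
    - have -> : D = s - a by apply/eqP; rewrite eq_le ge_min lexx le_min lexx h.
      by rewrite lerDl powR_ge0.
    - have -> : D = b - s.
        by apply/eqP; rewrite eq_le ge_min lexx orbT le_min lexx (ltW h).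
      by rewrite lerDr powR_ge0.
  rewrite E /M -!mulrA; apply: ler_wpM2l; first exact: powR_ge0.
  rewrite mulrC; apply: ler_wpM2l => //; exact: powR_ge0.
rewrite integral_itv_bndoo; last exact: (@meas_negpow _ gamma f a b cfab).
case: (ltrP a b) => ab'; last first.
  rewrite set_itv_ge ?integral_set0; last by rewrite bnd_simp -leNgt.
  by rewrite lee_fin ltW.
pose g := fun x : R => (x - a) `^ (- q) + (b - x) `^ (- q).
have cg : {within `]a, b[, continuous g}.
  apply: continuous_in_subspaceT => x; rewrite inE /= in_itv /= => /andP[ax xb].
  have H := is_deriveD (dpowl (- q) ax) (dpowr (- q) xb).
  have gE : g = (fun y => (y - a) `^ (- q)) + (fun y => (b - y) `^ (- q)).
    by apply/funext => y; rewrite !fctE.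
  rewrite gE; exact: (is_derive_cont H).
have mg : measurable_fun `]a, b[ g.
  exact: subspace_continuous_measurable_fun (measurable_itv _) cg.
have mMg : measurable_fun `]a, b[ (fun x => (M * g x)%:E).
  change (measurable_fun `]a, b[ (EFin \o (fun x => M * g x))).
  apply/measurable_EFinP; apply: measurable_funM => //; exact: measurable_cst.
apply: le_trans.
  apply: (@ge0_le_integral _ _ _ lebesgue_measure _ (measurable_itv _) _
    (fun x => (M * g x)%:E)).
  - move=> x _; rewrite /negpow_abs; case: ifP => _; [exact: le0y| by rewrite lee_fin powR_ge0].
  - exact: (@meas_negpow _ gamma f a b cfab).
  - exact: mMg.
  - move=> x; rewrite /= in_itv /= => axb; exact: pb.
under eq_integral do rewrite EFinM.
rewrite ge0_integralZl_EFin //; last 3 first.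
- by move=> x _; rewrite lee_fin addr_ge0 // powR_ge0.
- by change (measurable_fun `]a, b[ (EFin \o g)); apply/measurable_EFinP.
- exact: ltW.
apply: le_trans.
  apply: lee_wpmul2l; first by rewrite lee_fin ltW.
  exact: (@int_bound _ a b q ab' ltac:(by rewrite q0 q1)).
rewrite -EFinM lee_fin; apply: ler_wpM2l; first exact: ltW.
apply: ler_wpM2r; first by rewrite invr_ge0; lra.
apply: ler_wpM2l; first lra.
apply: powR_mono; lra.
Qed.
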